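(* Let $\alpha$ be an equidistributed infinite permutation. Then for every positive integer $N$, $\alpha$ has an $N$-maximal element and an $N$-minimal element.
   Context: An infinite permutation is an equivalence class of sequences $(a[n])_{n\ge0}$ of pairwise distinct reals, where two sequences are equivalent if $a[i]<a[j]\iff b[i]<b[j]$ for all $i,j$; write $\alpha=(\alpha[n])_{n\ge0}$ with the induced order. A sequence $(a[n])$ in $[0,1]$ is equidistributed if $\lim_{n\to\infty}\frac{\#\{0\le i<n:a[i]<t\}}{n}=t$ for each $t\in[0,1]$; a permutation is equidistributed if it has an equidistributed representative in $[0,1]$. An element $\alpha[i]$ with $i>N$ is $N$-maximal (resp. $N$-minimal) if $\alpha[i]>\alpha[j]$ (resp. $\alpha[i]<\alpha[j]$) for all $j\in\{i-N,\dots,i+N\}\setminus\{i\}$. *)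

(* Defs.v *)
From Stdlib Require Import Reals Lra Lia.
Open Scope R_scope.

(* A representative of an infinite permutation: a sequence of pairwise distinct reals. *)
Definition pairwise_distinct (a : nat -> R) : Prop :=
  forall i j : nat, i <> j -> a i <> a j.

(* Two sequences represent the same infinite permutation. *)
Definition same_order (a b : nat -> R) : Prop :=
  forall i j : nat, a i < a j <-> b i < b j.

Fixpoint count_below (a : nat -> R) (t : R) (n : nat) : nat :=
  match n with
  | O => O
  | S m => (count_below a t m + (if Rlt_dec (a m) t then 1 else 0))%nat
  end.

Definition equidistributed (a : nat -> R) : Prop :=
  (forall n, 0 <= a n <= 1) /\
  forall t, 0 <= t <= 1 ->
    Un_cv (fun n => INR (count_below a t n) / INR n) t.

Definition equidistributed_perm (a : nat -> R) : Prop :=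
  exists b : nat -> R, equidistributed b /\ same_order a b.

Definition N_maximal (a : nat -> R) (N i : nat) : Prop :=
  (i > N)%nat /\
  forall j : nat, (i - N <= j <= i + N)%nat -> j <> i -> a i > a j.

Definition N_minimal (a : nat -> R) (N i : nat) : Prop :=
  (i > N)%nat /\
  forall j : nat, (i - N <= j <= i + N)%nat -> j <> i -> a i < a j.

(* Main.v *)
Require Import Defs.
From Stdlib Require Import Reals.
From Stdlib Require Import Lra Lia Classical.
Open Scope R_scope.
Lemma alg x k d e : 1 <= d -> 1 <= x -> 0 <= k -> 0 < e -> k < x*e -> x/(k+x*d) > 1/d - e.
Proof.
intros. assert (Hn : 0 < k + x*d) by nra.
assert (E : x/(k+x*d) - (1/d - e) = (e*d*(k + x*d) - k)/(d*(k+x*d))) by (field; lra).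
assert (0 < (e*d*(k + x*d) - k)/(d*(k+x*d))).
{ apply Rdiv_lt_0_compat. 2: nra.
  assert (d*d >= 1) by nra. assert (e*x*(d*d) >= e*x) by nra.
  assert (e*d*k >= 0) by (apply Rle_ge; repeat apply Rmult_le_pos; lra). nra. }
lra.
Qed.

Lemma lim_lower (u : nat -> R) t K D : (D > 0)%nat -> Un_cv u t ->
  (forall q, u (K + q*D)%nat >= INR q / INR (K + q*D)) -> t >= 1 / INR D.
Proof.
intros HD Hc Hq. apply Rnot_lt_ge; intro Hlt.
set (e := (1/INR D - t)/2).
assert (He : e > 0) by (unfold e; lra).
destruct (Hc e He) as [n0 Hn0].
destruct (INR_archimed e (INR K) He) as [n1 Hn1].
set (q := (n1 + n0 + 1)%nat).
assert (HD1 : 1 <= INR D) by (apply (le_INR 1); lia).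
assert (Hq1 : 1 <= INR q) by (apply (le_INR 1); unfold q; lia).
assert (Hqn : INR n1 <= INR q) by (apply le_INR; unfold q; lia).
assert (A := alg (INR q) (INR K) (INR D) e HD1 Hq1 (pos_INR K) He ltac:(nra)).
specialize (Hq q). specialize (Hn0 (K + q*D)%nat ltac:(unfold q; nia)).
unfold R_dist in Hn0. apply Rabs_def2 in Hn0.
rewrite plus_INR in Hq.
rewrite mult_INR in Hq.
unfold e in *.
lra.
Qed.
Fixpoint cnt (P : nat -> bool) (n : nat) : nat :=
  match n with O => O | S m => (cnt P m + (if P m then 1 else 0))%nat end.

Lemma cnt_mono P m n : (m <= n)%nat -> (cnt P m <= cnt P n)%nat.
Proof. induction 1; simpl; lia. Qed.

Lemma cnt_window P n N k : (n <= k < n + N)%nat -> P k = true ->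
  (cnt P n + 1 <= cnt P (n + N))%nat.
Proof.
intros Hk HP. assert (cnt P n <= cnt P k)%nat by (apply cnt_mono; lia).
assert (cnt P (S k) <= cnt P (n+N))%nat by (apply cnt_mono; lia).
simpl in H0. rewrite HP in H0. lia.
Qed.

Lemma cnt_lin P K0 N : (forall K, (K >= K0)%nat -> exists k, (K <= k < K + N)%nat /\ P k = true) ->
  forall q, (q <= cnt P (K0 + q*N))%nat.
Proof.
intros H q. induction q. lia.
destruct (H (K0 + q*N)%nat ltac:(lia)) as [k [Hk HP]].
pose proof (cnt_window P (K0 + q*N) N k Hk HP).
replace (K0 + S q * N)%nat with (K0 + q*N + N)%nat by lia. lia.
Qed.

Lemma cnt_tail P M : (forall k, (k >= M)%nat -> P k = true) -> forall q, (q <= cnt P (M + q))%nat.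
Proof.
intros H q. induction q. lia.
replace (M + S q)%nat with (S (M+q)) by lia. simpl. rewrite H by lia. lia.
Qed.

Lemma cnt_le P n : (cnt P n <= n)%nat.
Proof. induction n; simpl; [lia|destruct (P n); lia]. Qed.

Lemma cnt_disj P Q n : (forall k, P k = true -> Q k = true -> False) -> (cnt P n + cnt Q n <= n)%nat.
Proof.
intros H. induction n; simpl. lia.
destruct (P n) eqn:E1; destruct (Q n) eqn:E2; try lia. exfalso; eauto.
Qed.

Lemma cnt_ext P Q n : (forall k, P k = Q k) -> cnt P n = cnt Q n.
Proof. intros H; induction n; simpl; auto. rewrite IHn, H. auto. Qed.

Definition above (b : nat -> R) t k : bool := if Rlt_dec t (b k) then true else false.
Definition below (b : nat -> R) t k : bool := if Rlt_dec (b k) t then true else false.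

Lemma argmax (b : nat -> R) L K : (L <= K)%nat -> exists r, (L <= r <= K)%nat /\
  forall j, (L <= j <= K)%nat -> b j <= b r.
Proof.
intros H. induction H.
- exists L. split. lia. intros j Hj. replace j with L by lia. lra.
- destruct IHle as [r [Hr Hb]].
  destruct (Rle_dec (b (S m)) (b r)).
  + exists r. split. lia. intros j Hj. destruct (Nat.eq_dec j (S m)). subst; auto. apply Hb; lia.
  + exists (S m). split. lia. intros j Hj. destruct (Nat.eq_dec j (S m)). subst; lra.
    specialize (Hb j ltac:(lia)). lra.
Qed.


Lemma core (b : nat -> R) N t : (N > 0)%nat ->
  (forall i j, i <> j -> b i <> b j) ->
  (forall i, ~ N_maximal b N i) ->
  (exists L, (L >= N+1)%nat /\ forall k, (k >= L)%nat -> b k < 1) ->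
  (forall c M, 0 <= c < 1 -> exists m, (m >= M)%nat /\ b m > c) ->
  0 <= t < 1 ->
  exists K0, forall q, (q <= cnt (above b t) (K0 + q*N))%nat.
Proof.
intros HN Hd Hnm [L [HL Hlt1]] H1 Ht.
destruct (argmax b L (L + N - 1) ltac:(lia)) as [r0 [Hr0 Hb0]].
set (c := Rmax t (b r0)).
assert (Hc : 0 <= c < 1).
{ unfold c. split. apply Rle_trans with t; [lra| apply Rmax_l].
  apply Rmax_lub_lt. lra. apply Hlt1. lia. }
destruct (H1 c (L+N)%nat Hc) as [m [Hm Hbm]].
exists m. apply cnt_lin. intros K HK.
destruct (argmax b L (K + N - 1) ltac:(lia)) as [r [Hr Hb]].
assert (Hbr : b r > c). { specialize (Hb m ltac:(lia)). lra. }
assert (Hrl : (r >= L + N)%nat).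
{ destruct (Compare_dec.le_lt_dec (L+N) r). lia. exfalso.
  specialize (Hb0 r ltac:(lia)). assert (b r0 <= c) by apply Rmax_r. lra. }
destruct (Compare_dec.le_lt_dec (r + N) (K + N - 1)) as [Hin|Hout].
- exfalso. apply (Hnm r). split. lia.
  intros j Hj Hjr. specialize (Hb j ltac:(lia)). specialize (Hd j r Hjr).
  destruct (Rle_lt_or_eq_dec _ _ Hb); [lra|congruence].
- exists r. split. lia. unfold above. destruct (Rlt_dec t (b r)). auto.
  exfalso. assert (t <= c) by apply Rmax_l. lra.
Qed.


Lemma div_mono a b n : (a <= b)%nat -> INR a / INR n <= INR b / INR n.
Proof.
intros H. destruct n. simpl. unfold Rdiv. rewrite Rinv_0. lra.
unfold Rdiv. apply Rmult_le_compat_r.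
left. apply Rinv_0_lt_compat. apply lt_0_INR; lia. apply le_INR; auto.
Qed.

Lemma one_minus_div cb q n : (cb + q <= n)%nat -> 1 - INR cb / INR n >= INR q / INR n.
Proof.
intros H. destruct n. replace cb with 0%nat by lia. replace q with 0%nat by lia.
simpl. unfold Rdiv. rewrite Rinv_0. lra.
assert (Hn : 0 < INR (S n)) by (apply lt_0_INR; lia).
assert (INR cb + INR q <= INR (S n)) by (rewrite <- plus_INR; apply le_INR; auto).
assert (E : 1 - INR cb / INR (S n) - INR q / INR (S n) = (INR (S n) - INR cb - INR q) / INR (S n)) by (field; lra).
assert (0 <= (INR (S n) - INR cb - INR q) / INR (S n)).
{ unfold Rdiv. apply Rmult_le_pos. lra. left. apply Rinv_0_lt_compat. lra. }
lra.
Qed.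

Lemma cv_one_minus u t : Un_cv u t -> Un_cv (fun n => 1 - u n) (1 - t).
Proof.
intros H e He. destruct (H e He) as [n0 Hn0]. exists n0. intros n Hn.
specialize (Hn0 n Hn). unfold R_dist in *.
replace (1 - u n - (1 - t)) with (- (u n - t)) by ring. rewrite Rabs_Ropp. auto.
Qed.

Lemma cb_eq b t n : count_below b t n = cnt (below b t) n.
Proof. induction n; simpl; auto. rewrite IHn. unfold below. destruct (Rlt_dec (b n) t); auto. Qed.

Lemma max_exists (b : nat -> R) N : (N > 0)%nat ->
  (forall i j, i <> j -> b i <> b j) -> equidistributed b ->
  exists i, N_maximal b N i.
Proof.
intros HN Hd [Hr Heq].
apply NNPP. intro Hno.
assert (Hnm : forall i, ~ N_maximal b N i) by (intros i Hi; apply Hno; eauto).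
assert (H2 : exists L, (L >= N+1)%nat /\ forall k, (k >= L)%nat -> b k < 1).
{ destruct (classic (exists p, b p = 1)) as [[p Hp]|Hnp].
  - exists (p + N + 1)%nat. split. lia. intros k Hk.
    destruct (Hr k). destruct H0; auto. exfalso. apply (Hd k p). lia. congruence.
  - exists (N+1)%nat. split. lia. intros k Hk. destruct (Hr k). destruct H0; auto.
    exfalso; eauto. }
assert (H1 : forall c M, 0 <= c < 1 -> exists m, (m >= M)%nat /\ b m > c).
{ intros c M Hc. apply NNPP. intro Hn.
  assert (Hle : forall m, (m >= M)%nat -> b m <= c).
  { intros m Hm. apply Rnot_lt_le. intro. apply Hn. exists m. split; auto. }
  set (t' := (c+1)/2).
  assert (Ht' : 0 <= t' <= 1) by (unfold t'; lra).
  pose proof (Heq t' Ht') as Hcv.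
  assert (L := lim_lower _ t' M 1 ltac:(lia) Hcv).
  assert (t' >= 1 / INR 1).
  { apply L. intros q. apply Rle_ge. rewrite cb_eq. apply div_mono.
    replace (M + q*1)%nat with (M+q)%nat by lia. apply cnt_tail.
    intros k Hk. unfold below. destruct (Rlt_dec (b k) t'); auto.
    specialize (Hle k Hk). unfold t' in n. lra. }
  simpl in H. unfold t' in H. lra. }
assert (HNr : 1 <= INR N) by (apply (le_INR 1); lia).
set (t := 1 - 1 / (2 * INR N)).
assert (Ht : 0 <= t < 1).
{ unfold t. assert (0 < 1/(2*INR N) <= 1/2).
  { split. apply Rdiv_lt_0_compat; lra.
    unfold Rdiv. rewrite !Rmult_1_l. apply Rinv_le_contravar; lra. }
  lra. }
destruct (core b N t HN Hd Hnm H2 H1 Ht) as [K0 HK0].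
pose proof (cv_one_minus _ _ (Heq t ltac:(lra))) as Hcv.
assert (1 - t >= 1 / INR N).
{ apply (lim_lower _ _ K0 N HN Hcv). intros q. apply one_minus_div.
  rewrite cb_eq. pose proof (HK0 q).
  pose proof (cnt_disj (below b t) (above b t) (K0 + q*N)).
  assert (Hdj : forall k, below b t k = true -> above b t k = true -> False).
  { intros k. unfold below, above. destruct (Rlt_dec (b k) t); destruct (Rlt_dec t (b k)); try discriminate. lra. }
  specialize (H0 Hdj). lia. }
unfold t in H. assert (1/(2*INR N) < 1/INR N).
{ unfold Rdiv. rewrite !Rmult_1_l. apply Rinv_lt_contravar; nra. }
lra.
Qed.

Lemma min_exists (b : nat -> R) N : (N > 0)%nat ->
  (forall i j, i <> j -> b i <> b j) -> equidistributed b ->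
  exists i, N_minimal b N i.
Proof.
intros HN Hd [Hr Heq].
set (b' := fun k => 1 - b k).
apply NNPP. intro Hno.
assert (Hnm : forall i, ~ N_maximal b' N i).
{ intros i [Hi Hj]. apply Hno. exists i. split; auto. intros j Hj1 Hj2.
  specialize (Hj j Hj1 Hj2). unfold b' in Hj. lra. }
assert (Hd' : forall i j, i <> j -> b' i <> b' j).
{ intros i j Hij E. apply (Hd i j Hij). unfold b' in E. lra. }
assert (H2 : exists L, (L >= N+1)%nat /\ forall k, (k >= L)%nat -> b' k < 1).
{ unfold b'. destruct (classic (exists p, b p = 0)) as [[p Hp]|Hnp].
  - exists (p + N + 1)%nat. split. lia. intros k Hk.
    destruct (Hr k). destruct H; [lra|]. exfalso. apply (Hd p k). lia. congruence.
  - exists (N+1)%nat. split. lia. intros k Hk. destruct (Hr k). destruct H; [lra|].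
    exfalso; eauto. }
assert (H1 : forall c M, 0 <= c < 1 -> exists m, (m >= M)%nat /\ b' m > c).
{ intros c M Hc. apply NNPP. intro Hn.
  assert (Hle : forall m, (m >= M)%nat -> b m >= 1 - c).
  { intros m Hm. apply Rnot_lt_ge. intro. apply Hn. exists m. split; auto. unfold b'. lra. }
  set (s := (1 - c)/2).
  assert (Hs : 0 <= s <= 1) by (unfold s; lra).
  pose proof (cv_one_minus _ _ (Heq s Hs)) as Hcv.
  assert (L := lim_lower _ _ M 1 ltac:(lia) Hcv).
  assert (1 - s >= 1 / INR 1).
  { apply L. intros q. apply one_minus_div. rewrite cb_eq.
    set (P := fun k => Nat.leb M k).
    pose proof (cnt_tail P M ltac:(intros k Hk; unfold P; apply Nat.leb_le; lia) q).
    pose proof (cnt_disj (below b s) P (M + q * 1)).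
    assert (forall k, below b s k = true -> P k = true -> False).
    { intros k. unfold below, P. destruct (Rlt_dec (b k) s); try discriminate.
      intros _ Hk. apply Nat.leb_le in Hk. specialize (Hle k Hk). unfold s in r. lra. }
    specialize (H0 H1). replace (M + q*1)%nat with (M+q)%nat in * by lia. lia. }
  simpl in H. unfold s in H. lra. }
assert (HNr : 1 <= INR N) by (apply (le_INR 1); lia).
set (t := 1 - 1 / (2 * INR N)).
assert (Hpos : 0 < 1/(2*INR N) <= 1/2).
{ split. apply Rdiv_lt_0_compat; lra.
  unfold Rdiv. rewrite !Rmult_1_l. apply Rinv_le_contravar; lra. }
assert (Ht : 0 <= t < 1) by (unfold t; lra).
destruct (core b' N t HN Hd' Hnm H2 H1 Ht) as [K0 HK0].
set (s := 1/(2*INR N)).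
assert (s >= 1 / INR N).
{ apply (lim_lower _ _ K0 N HN (Heq s ltac:(unfold s; lra))). intros q.
  apply Rle_ge. rewrite cb_eq. apply div_mono.
  rewrite (cnt_ext (below b s) (above b' t)). apply HK0.
  intros k. unfold below, above, b', t, s.
  destruct (Rlt_dec (b k) (1 / (2 * INR N))); destruct (Rlt_dec (1 - 1 / (2 * INR N)) (1 - b k)); auto; lra. }
unfold s in H. assert (1/(2*INR N) < 1/INR N).
{ unfold Rdiv. rewrite !Rmult_1_l. apply Rinv_lt_contravar; nra. }
lra.
Qed.

Theorem proposition2 (a : nat -> R) :
  pairwise_distinct a -> equidistributed_perm a ->
  forall N : nat, (N > 0)%nat ->
    (exists i : nat, N_maximal a N i) /\ (exists i : nat, N_minimal a N i).
Proof.
intros Hd [b [Heb Hso]] N HN.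
assert (Hdb : forall i j, i <> j -> b i <> b j).
{ intros i j Hij E. pose proof (Hd i j Hij).
  destruct (Rtotal_order (a i) (a j)) as [Hl|[Hl|Hl]]; [|contradiction|].
  - apply Hso in Hl. lra.
  - apply Hso in Hl. lra. }
split.
- destruct (max_exists b N HN Hdb Heb) as [i [Hi Hj]]. exists i. split; auto.
  intros j H1 H2. specialize (Hj j H1 H2). apply Hso. auto.
- destruct (min_exists b N HN Hdb Heb) as [i [Hi Hj]]. exists i. split; auto.
  intros j H1 H2. specialize (Hj j H1 H2). apply Hso. auto.
Qed.
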